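(* Let $T$ be a tree with a proper 2-coloring $\chi:V\to\{\mathcal{R},\mathcal{B}\}$. The following are equivalent: (1) $T$ is balanced; (2) any two vertices of the same height have the same color under $\chi$; (3) every leaf has the same color.
   Context: A leaf is a vertex of degree 1; the height of a vertex is its minimum distance to a leaf (an isolated vertex has height 0). $T$ is balanced if no two adjacent vertices have the same height. A proper 2-coloring assigns different colors to adjacent vertices. *)

(* Defs.v *)
From mathcomp Require Import all_boot.
Set Implicit Arguments. Unset Strict Implicit. Unset Printing Implicit Defensive.

Section Graph.
Variables (T : finType) (e : rel T).

Definition simple_graph : Prop := symmetric e /\ irreflexive e.

Definition connected_graph : Prop := forall x y : T, connect e x y.

Definition acyclic_graph : Prop := forall c : seq T, 3 <= size c -> ~~ ucycleb e c.

Definition is_tree : Prop := [/\ simple_graph, connected_graph & acyclic_graph].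

Definition deg (x : T) : nat := #|[set y | e x y]|.
Definition leaf (x : T) : bool := deg x == 1.

Fixpoint reach (n : nat) (x y : T) : bool :=
  if n is n'.+1 then [exists z, reach n' x z && e z y] else x == y.

(* distance: least n < #|T| with a walk of length n (in a connected graph,
   this is the usual shortest-path distance) *)
Definition dist (x y : T) : nat := find (fun n => reach n x y) (iota 0 #|T|).

Definition height (v : T) : nat :=
  if deg v == 0 then 0 else \big[minn/#|T|]_(l | leaf l) dist v l.

Definition balanced : Prop := forall x y : T, e x y -> height x <> height y.

(* proper 2-coloring with colors bool (true = R, false = B) *)
Definition proper_2coloring (chi : T -> bool) : Prop :=
  forall x y : T, e x y -> chi x <> chi y.

End Graph.

(* Main.v *)
Require Import Defs.
From mathcomp Require Import all_boot.
From mathcomp Require Import zify.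

Set Implicit Arguments. Unset Strict Implicit.
Section Aux.
Variables (T : finType) (e : rel T).

Lemma reach_rcons x p : path e x p -> reach e (size p) x (last x p).
Proof.
elim/last_ind: p => [|p z IH] /=; first by rewrite eqxx.
rewrite rcons_path size_rcons last_rcons => /andP[Hp Hz].
apply/existsP; exists (last x p); apply/andP; split; [exact: IH|done].
Qed.

Lemma uniq_size {s : seq T} : uniq s -> size s <= #|T|.
Proof. by move/card_uniqP => <-; apply: max_card. Qed.

Lemma conn_reach x y : connect e x y -> exists2 n, n < #|T| & reach e n x y.
Proof.
move/connectP=> [p Hp ->]; case: (shortenP Hp) => p' Hp' Hu _.
exists (size p'); last exact: reach_rcons.
by have := uniq_size Hu; rewrite /=.
Qed.

Lemma dist_le x y n : reach e n x y -> dist e x y <= n.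
Proof.
move=> H; rewrite /dist.
case: (ltnP n #|T|) => Hn; last first.
  by apply: leq_trans (find_size _ _) _; rewrite size_iota.
rewrite leqNgt; apply/negP => Hf.
have := before_find 0 Hf; rewrite nth_iota // add0n H //.
Qed.

Lemma dist_reach x y n : reach e n x y -> n < #|T| ->
  reach e (dist e x y) x y /\ dist e x y < #|T|.
Proof.
move=> H Hn.
have Hh : has (fun n => reach e n x y) (iota 0 #|T|).
  by apply/hasP; exists n => //; rewrite mem_iota.
have := nth_find 0 Hh; have := (find_size (fun n => reach e n x y) (iota 0 #|T|)).
rewrite size_iota => Hs.
have Hlt : dist e x y < #|T|.
  by have := dist_le H; lia.
by rewrite nth_iota // add0n.
Qed.

Lemma reach_cons w x y n : e w x -> reach e n x y -> reach e n.+1 w y.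
Proof.
move=> Hw; elim: n y => [|n IH] y /=.
  by move/eqP=> <-; apply/existsP; exists w; rewrite eqxx.
move/existsP=> [z /andP[Hz Hzy]]; apply/existsP; exists z; apply/andP; split; [exact: IH|done].
Qed.

Lemma reach_first x y n : reach e n.+1 x y -> exists z, e x z.
Proof.
elim: n y => [|n IH] y /=.
  by move/existsP=> [z /andP[/eqP <- H]]; exists y.
move/existsP=> [z /andP[Hz _]]; exact: IH Hz.
Qed.

Lemma reach_par (chi : T -> bool) : proper_2coloring e chi ->
  forall n x y, reach e n x y -> chi y = chi x (+) odd n.
Proof.
move=> Hp; elim=> [|n IH] x y /=; first by move/eqP=> ->; rewrite addbF.
move/existsP=> [z /andP[Hz Hzy]]; move: (IH _ _ Hz) (Hp _ _ Hzy).
by case: (chi y); case: (chi z); case: (chi x); case: (odd n).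
Qed.

Lemma reach_inv (f : T -> bool) : (forall z y, e z y -> f y = f z) ->
  forall n x y, reach e n x y -> f y = f x.
Proof.
move=> Hf; elim=> [|n IH] x y /=; first by move/eqP=> ->.
move/existsP=> [z /andP[Hz Hzy]]; rewrite (Hf _ _ Hzy); exact: IH Hz.
Qed.

Lemma bigmin_le (s : seq T) (P : pred T) (F : T -> nat) N l :
  l \in s -> P l -> \big[minn/N]_(i <- s | P i) F i <= F l.
Proof.
elim: s => // a s IH; rewrite inE big_cons => /orP[/eqP <-|Hl] Hp.
  by rewrite Hp geq_minl.
case: (P a); last exact: IH.
by rewrite geq_min IH ?orbT.
Qed.

Lemma height_le v l : deg e v != 0 -> leaf e l -> height e v <= dist e v l.
Proof.
move=> Hd Hl; rewrite /height (negbTE Hd); apply: bigmin_le => //; exact: mem_index_enum.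
Qed.

Lemma height_leN v : height e v <= #|T|.
Proof.
rewrite /height; case: ifP => // _.
elim/big_ind: _ => // [a b Ha Hb|a _]; first by rewrite geq_min Ha.
by have := find_size (fun n => reach e n v a) (iota 0 #|T|); rewrite size_iota.
Qed.

Lemma height_cases v : deg e v != 0 ->
  height e v = #|T| \/ exists2 l, leaf e l & height e v = dist e v l.
Proof.
move=> Hd; rewrite /height (negbTE Hd).
elim/big_ind: _ => [|a b Ha Hb|l Hl]; [by left| |by right; exists l].
by rewrite /minn; case: ifP.
Qed.

Lemma deg_edge x y : e x y -> deg e x != 0.
Proof.
move=> H; rewrite /deg -lt0n; apply/card_gt0P; exists y; by rewrite inE.
Qed.

Lemma deg2 z w : e z w -> deg e z != 1 -> exists2 u, e z u & u != w.
Proof.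
move=> Hw H1.
case: (boolP [exists u, e z u && (u != w)]).
  by move/existsP=> [u /andP[]]; exists u.
move=> Hn; exfalso; move: H1; rewrite /deg.
have -> : [set y | e z y] = [set w].
  apply/setP=> y; rewrite !inE; apply/idP/idP; last by move/eqP->.
  move=> Hy; apply/negPn/negP => Hyw; move/negP: Hn; apply.
  by apply/existsP; exists y; rewrite Hy.
by rewrite cards1.
Qed.

Lemma leaf_exists : is_tree e -> forall x y, e x y -> exists l, leaf e l.
Proof.
move=> [[Hsym Hirr] _ Hac] x0 y0 H0.
suff: forall n (z w : T) q, #|T| - size (z :: w :: q) = n ->
   path e z (w :: q) -> uniq (z :: w :: q) -> exists l, leaf e l.
  move/(_ _ y0 x0 [::] erefl); apply; first by rewrite /= Hsym H0.
  by rewrite /= inE andbT; apply/negP => /eqP E; move: H0; rewrite E Hirr.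
elim/ltn_ind=> n IH z w q Hn Hp Hu.
have Hzw : e z w by move: Hp => /= /andP[].
case: (boolP (leaf e z)) => [Hl|Hl]; first by exists z.
have [u Hzu Huw] := deg2 Hzw Hl.
case: (boolP (u \in z :: w :: q)) => Hin.
- exfalso.
  have Huz : u != z by apply/negP => /eqP E; move: Hzu; rewrite E Hirr.
  have Huq : u \in q by move: Hin; rewrite !inE (negbTE Huz) (negbTE Huw).
  clear Hin Hn IH; move: Hp Hu; case/splitPr: Huq => p1 p2 Hp Hu.
  have Hs : 3 <= size (z :: w :: rcons p1 u) by rewrite /= size_rcons.
  move/negP: (Hac _ Hs); apply.
  rewrite /ucycleb; apply/andP; split.
    move: Hp => /= /andP[-> ]; rewrite cat_path => /andP[H1 /= /andP[H2 _]].
    by rewrite !rcons_path H1 H2 last_rcons Hsym.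
  by move: Hu; rewrite -cat_rcons -!cat_cons cat_uniq => /andP[].
- have Hu' : uniq (u :: z :: w :: q) by rewrite cons_uniq Hin Hu.
  apply: (IH (#|T| - size (u :: z :: w :: q)) _ u z (w :: q) erefl).
  + have := uniq_size Hu'; move: Hn; rewrite /=; lia.
  + by rewrite /= Hsym Hzu.
  + done.
Qed.

End Aux.
Unset Implicit Arguments.

Lemma iso_eq (T : finType) (e : rel T) x y : connected_graph e ->
  deg e x == 0 -> x = y.
Proof.
move=> Hc Hd; have [n _ H] := conn_reach (Hc x y).
case: n H => [/eqP //|n] /reach_first [z Hz].
by move: (deg_edge Hz); rewrite Hd.
Qed.

Lemma deg_nbr (T : finType) (e : rel T) x : deg e x != 0 -> exists z, e x z.
Proof.
rewrite /deg -lt0n => /card_gt0P [z]; rewrite inE => H; by exists z.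
Qed.

Theorem proposition3p17 (T : finType) (e : rel T) (chi : T -> bool) :
  is_tree e -> proper_2coloring e chi ->
  (balanced e <-> (forall x y : T, height e x = height e y -> chi x = chi y)) /\
  ((forall x y : T, height e x = height e y -> chi x = chi y) <->
   (forall l l' : T, leaf e l -> leaf e l' -> chi l = chi l')).
Proof.
move=> Htree Hp; have [[Hsym Hirr] Hcon Hac] := Htree.
have Hdr : forall x y, exists2 n, n < #|T| & reach e n x y.
  by move=> x y; apply: conn_reach.
have Hdist : forall x y, reach e (dist e x y) x y /\ dist e x y < #|T|.
  by move=> x y; have [n Hn H] := Hdr x y; apply: dist_reach H Hn.
have hleaf : forall l, leaf e l -> height e l = 0.
  move=> l Hl; apply/eqP; rewrite -leqn0.
  have Hd : deg e l != 0 by move: Hl; rewrite /leaf => /eqP ->.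
  apply: leq_trans (height_le Hd Hl) _.
  by apply: (@dist_le _ _ _ _ 0); rewrite /= eqxx.
have hadj : forall u v, e u v -> height e u <= (height e v).+1.
  move=> u v Huv.
  have Hdu := deg_edge Huv.
  have Hdv : deg e v != 0 by apply: (@deg_edge _ _ _ u); rewrite Hsym.
  case: (height_cases Hdv) => [->|[l Hl ->]].
    by apply: leq_trans (height_leN _ _) _.
  apply: leq_trans (height_le Hdu Hl) _; apply: dist_le.
  apply: reach_cons Huv _; exact: (Hdist v l).1.
have Hchi : forall z y, e z y -> chi y = ~~ chi z.
  move=> z y H; move: (Hp _ _ H); by case: (chi y); case: (chi z).
have i12 : balanced e -> forall x y, height e x = height e y -> chi x = chi y.
  move=> Hb x y Hxy.
  pose f v := chi v (+) odd (height e v).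
  have Hf : forall z y, e z y -> f y = f z.
    move=> z y' H; rewrite /f (Hchi _ _ H).
    have h1 := hadj _ _ H; have h2 : height e y' <= (height e z).+1.
      by apply: hadj; rewrite Hsym.
    have h3 := Hb _ _ H.
    have [E|E] : height e y' = (height e z).+1 \/ height e z = (height e y').+1 by lia.
      by rewrite E /=; case: (chi z); case: (odd _).
    by rewrite E /=; case: (chi z); case: (odd _).
  have [n _ H] := Hdr x y.
  have := reach_inv Hf H; rewrite /f Hxy.
  by case: (chi x); case: (chi y); case: (odd _).
have i21 : (forall x y, height e x = height e y -> chi x = chi y) -> balanced e.
  move=> H x y Hxy Hh; exact: (Hp _ _ Hxy (H _ _ Hh)).
have i23 : (forall x y, height e x = height e y -> chi x = chi y) ->
    forall l l', leaf e l -> leaf e l' -> chi l = chi l'.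
  move=> H l l' Hl Hl'; apply: H; by rewrite !hleaf.
have i32 : (forall l l', leaf e l -> leaf e l' -> chi l = chi l') ->
    forall x y, height e x = height e y -> chi x = chi y.
  move=> H3 x y Hxy.
  have key : forall v, deg e v != 0 -> forall l0, leaf e l0 ->
      chi v = chi l0 (+) odd (height e v).
    move=> v Hv l0 Hl0.
    case: (height_cases Hv) => [E|[l Hl E]].
      have := height_le Hv Hl0; rewrite E; have := (Hdist v l0).2; lia.
    have := reach_par Hp (Hdist v l).1; rewrite -E (H3 l l0) // => ->.
    by case: (chi v); case: (odd _).
  case: (boolP (deg e x == 0)) => Hx; first by rewrite (@iso_eq _ _ x y Hcon Hx).
  case: (boolP (deg e y == 0)) => Hy; first by rewrite (@iso_eq _ _ y x Hcon Hy).
  have [z Hz] := @deg_nbr _ _ _ Hx.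
  have [l0 Hl0] := leaf_exists Htree Hz.
  by rewrite (key _ Hx _ Hl0) (key _ Hy _ Hl0) Hxy.
split; split; [exact: i12|exact: i21|exact: i23|exact: i32].
Qed.
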